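(* Let $F\in\mathbb C[x,y,s,t]$ be a polynomial of degree $d$ that is not Cartesian. Then there are at most $d^2$ points $q=(s_q,t_q)\in\mathbb C^2$ for which $C_q=\mathbb C^2$, where $C_q=\{(x,y)\in\mathbb C^2: F(x,y,s_q,t_q)=0\}$.
   Context: $F\in\mathbb C[x,y,s,t]$ is Cartesian if there exist $G\in\mathbb C[x,y]\setminus\mathbb C$, $K\in\mathbb C[s,t]\setminus\mathbb C$ and $H,L\in\mathbb C[x,y,s,t]$ with $F=G(x,y)H(x,y,s,t)+K(s,t)L(x,y,s,t)$. *)

(* Defs.v *)
(* C := R[i] for R : realType (the real numbers), i.e. the
   complex numbers; polynomials in C[x,y,s,t] are {mpoly C[4]} with variable
   indices x = 0, y = 1, s = 2, t = 3. *)
From HB Require Import structures.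
From mathcomp Require Import all_boot all_algebra.
From mathcomp Require Import reals complex.
From mathcomp Require Import mpoly.
Set Implicit Arguments. Unset Strict Implicit. Unset Printing Implicit Defensive.
Import GRing.Theory Num.Theory.
Local Open Scope ring_scope.

Section Defs.
Variable K : ringType.

Definition ix : 'I_4 := @Ordinal 4 0 isT.
Definition iy : 'I_4 := @Ordinal 4 1 isT.
Definition is_ : 'I_4 := @Ordinal 4 2 isT.
Definition it : 'I_4 := @Ordinal 4 3 isT.

Definition embed_xy (G : {mpoly K[2]}) : {mpoly K[4]} :=
  G \mPo [tuple 'X_ix; 'X_iy].
Definition embed_st (G : {mpoly K[2]}) : {mpoly K[4]} :=
  G \mPo [tuple 'X_is_; 'X_it].

(* total degree of a polynomial (msize = 1 + degree, 0 for the zero poly) *)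
Definition tdeg n (F : {mpoly K[n]}) : nat := (msize F).-1.

Definition nonconst n (G : {mpoly K[n]}) : Prop := forall c : K, G <> c%:MP.

Definition cartesian (F : {mpoly K[4]}) : Prop :=
  exists (G Kp : {mpoly K[2]}) (H L : {mpoly K[4]}),
    nonconst G /\ nonconst Kp /\ F = embed_xy G * H + embed_st Kp * L.

Definition ev4 (F : {mpoly K[4]}) (x y s t : K) : K :=
  F.@[tnth [tuple x; y; s; t]].

End Defs.

(* Main.v *)
Require Import Defs.
From HB Require Import structures.
From mathcomp Require Import all_boot all_algebra.
From mathcomp Require Import reals complex.
From mathcomp Require Import mpoly.
From mathcomp Require Import fingroup perm zify ring.
From Stdlib Require Import Classical.
Set Implicit Arguments. Unset Strict Implicit. Unset Printing Implicit Defensive.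
Import GRing.Theory Num.Theory.
Local Open Scope ring_scope.


Section Gen.

Lemma mmap_comp (n : nat) (R S T : nzRingType) (f : R -> S) (h : 'I_n -> S)
   (phi : {rmorphism S -> T}) (p : {mpoly R[n]}) :
  phi (mmap f h p) = mmap (phi \o f) (phi \o h) p.
Proof.
rewrite /mmap rmorph_sum; apply: eq_bigr => m _.
rewrite rmorphM /mmap1 rmorph_prod /=; congr (_ * _).
by apply: eq_bigr => i _; rewrite rmorphXn.
Qed.

Lemma mmap_ext (n : nat) (R S : nzRingType) (f1 f2 : R -> S) (h1 h2 : 'I_n -> S)
   (p : {mpoly R[n]}) : f1 =1 f2 -> h1 =1 h2 -> mmap f1 h1 p = mmap f2 h2 p.
Proof.
move=> ef eh; rewrite /mmap; apply: eq_bigr => m _.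
by rewrite ef (mmap1_eq _ eh).
Qed.

Lemma mpoly_morph_id (n : nat) (R : comNzRingType)
   (phi : {rmorphism {mpoly R[n]} -> {mpoly R[n]}}) :
  (forall c, phi c%:MP = c%:MP) -> (forall i, phi 'X_i = 'X_i) ->
  forall p, phi p = p.
Proof.
move=> hC hX p; rewrite [in RHS](mpolyE p) [in LHS](mpolyE p) rmorph_sum.
apply: eq_bigr => m _; rewrite -mul_mpolyC rmorphM hC mpolyXE_id rmorph_prod.
by congr (_ * _); apply: eq_bigr => i _; rewrite rmorphXn hX.
Qed.

Variable K : numClosedFieldType.

Lemma poly_vanish (p : {poly K}) : (forall x, p.[x] = 0) -> p = 0.
Proof.
move=> hp; apply/eqP; apply: contraT => nz.
have := max_poly_roots nz (rs := [seq i%:R | i <- iota 0 (size p)]).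
rewrite size_map size_iota ltnn; apply.
  by apply/allP => x /mapP [i _ ->]; apply/rootP.
rewrite map_inj_uniq ?iota_uniq // => i j /eqP; rewrite eqr_nat => /eqP.
done.
Qed.

Lemma hornerXP (S : comNzRingType) (r : {poly S}) : (map_poly polyC r).['X] = r.
Proof.
rewrite horner_coef size_map_polyC -[r in RHS]coefK poly_def; apply: eq_bigr => i _.
by rewrite coef_map /= mul_polyC.
Qed.

End Gen.


Section P2.
Variable K : numClosedFieldType.
Local Notation P2 := {poly {poly K}}.

Definition prim (r : P2) := forall a : K, map_poly (horner_eval a) r != 0.

Lemma coefs_root_div (k : P2) a : map_poly (horner_eval a) k = 0 ->
  exists k1 : P2, k = ('X - a%:P) *: k1.
Proof.
move=> hk; exists (\poly_(i < size k) (k`_i %/ ('X - a%:P))).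
apply/polyP => i; rewrite coefZ coef_poly.
case: ltnP => hi; last by rewrite mulr0; apply/(leq_sizeP _ _ (leqnn _)).
have : (map_poly (horner_eval a) k)`_i = 0 by rewrite hk coef0.
rewrite coef_map /= /horner_eval => /eqP hr.
have hd : ('X - a%:P) %| k`_i by rewrite dvdp_XsubCl; apply/rootP/eqP.
by rewrite mulrC divpK.
Qed.

Lemma scaleP2I (c : {poly K}) (u v : P2) : c != 0 -> c *: u = c *: v -> u = v.
Proof.
move=> nz; rewrite -!mul_polyC => /mulfI; apply; by rewrite polyC_eq0.
Qed.

Lemma prim_decomp (r : P2) : r != 0 ->
  exists e r', [/\ r = e *: r', prim r' & size r' = size r].
Proof.
move: {2}(size (lead_coef r)) (leqnn (size (lead_coef r))) => n.
elim: n r => [|n IH] r hs nz.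
  by move: hs; rewrite leqn0 size_poly_eq0 lead_coef_eq0 (negPf nz).
have [hp|hnp] := classic (prim r); first by exists 1, r; rewrite scale1r.
have [a ha] : exists a, ~~ (map_poly (horner_eval a) r != 0).
  apply: NNPP => hn; apply: hnp => a; apply: NNPP => h; apply: hn.
  by exists a; apply/negP.
move: ha; rewrite negbK => /eqP /coefs_root_div [r1 hr1].
have nzX : ('X - a%:P : {poly K}) != 0 by rewrite polyXsubC_eq0.
have nz1 : r1 != 0 by apply: contra nz; rewrite hr1 => /eqP ->; rewrite scaler0.
have [|e [r' [h1 h2 h3]]] := IH r1 _ nz1.
  move: hs; rewrite hr1 lead_coefZ size_mul ?lead_coef_eq0 //.
  by rewrite size_XsubC.
exists (('X - a%:P) * e), r'; split => //; first by rewrite hr1 h1 scalerA.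
by rewrite h3 hr1 size_scale.
Qed.

Lemma gauss (c : {poly K}) (f k r : P2) : c != 0 -> prim r -> c *: f = k * r ->
  exists k', f = k' * r.
Proof.
move: {2}(size c) (leqnn (size c)) => n.
elim: n c k => [|n IH] c k hs nzc pr he.
  by move: hs; rewrite leqn0 size_poly_eq0 (negPf nzc).
have [s1|s1] := eqVneq (size c) 1%N.
  have uc : c \is a GRing.unit.
    rewrite poly_unitE s1 eqxx /= unitfE.
    have : lead_coef c != 0 by rewrite lead_coef_eq0.
    by rewrite lead_coefE s1.
  exists (c^-1 *: k); rewrite -scalerAl -he scalerA mulVr ?scale1r //.
have [a /factor_theorem [c1 hc1]] := closed_rootP c s1.
have nzX : ('X - a%:P : {poly K}) != 0 by rewrite polyXsubC_eq0.
have nzc1 : c1 != 0 by apply: contra nzc; rewrite hc1 => /eqP ->; rewrite mul0r.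
have hk : map_poly (horner_eval a) k = 0.
  have := congr1 (map_poly (horner_eval a)) he.
  rewrite -mul_polyC !rmorphM /= map_polyC /= /horner_eval hc1 hornerM hornerXsubC.
  rewrite subrr mulr0 mul0r => /esym /eqP; rewrite mulf_eq0 (negPf (pr a)) orbF.
  by move/eqP.
have [k1 hk1] := coefs_root_div hk.
apply: (IH c1 k1) => //.
  by move: hs; rewrite hc1 size_mul // size_XsubC addn2.
apply: (@scaleP2I ('X - a%:P)) => //.
by rewrite scalerA mulrC -hc1 he hk1 scalerAl.
Qed.

Lemma res0_factor (f g : P2) : resultant f g = 0 ->
  exists h : P2, [/\ (1 < size h)%N, exists k, f = k * h & exists k, g = k * h].
Proof.
move/eqP; rewrite resultant_eq0 => hs.
set r := gcdp f g in hs.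
have nzr : r != 0 by rewrite -size_poly_eq0; apply: contraTneq hs => ->.
have [e [r' [hr pr sr]]] := prim_decomp nzr.
have nze : e != 0 by apply: contra nzr; rewrite hr => /eqP ->; rewrite scale0r.
have dv (p : P2) : r %| p -> exists k, p = k * r'.
  case/Pdiv.Idomain.dvdpP => [[c k] /= nzc hc]; apply: (@gauss c p (e *: k) r' nzc pr).
  by rewrite hc hr -scalerAr scalerAl.
exists r'; split; first by rewrite sr.
  by apply: dv; apply: dvdp_gcdl.
by apply: dv; apply: dvdp_gcdr.
Qed.

End P2.


Section P2res.
Variable K : numClosedFieldType.
Local Notation P2 := {poly {poly K}}.

Definition ev2 (r : P2) (s0 t0 : K) : K := (map_poly (horner_eval s0) r).[t0].
Definition tb (d : nat) (r : P2) := forall i, (size (r`_i)%R <= d.+1 - i)%N.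

Lemma size_map_leq (R S : nzRingType) (f : {additive R -> S}) (p : {poly R}) :
  (size (map_poly f p) <= size p)%N.
Proof. by rewrite /map_poly size_poly. Qed.

Lemma band_sum (p : P2) (s0 t0 : K) (k dS : nat) : (k + size p <= dS)%N ->
  \sum_(j < dS) t0 ^+ j * (p`_(j - k) *+ (k <= j)%N).[s0] = t0 ^+ k * ev2 p s0 t0.
Proof.
move=> h; rewrite /ev2 (horner_coef_wide (n := dS - k)); last first.
  have h2 : (size p <= dS - k)%N by lia.
  by apply: leq_trans (size_map_leq _ _) _; exact: h2.
rewrite -(big_mkord xpredT (fun j => t0 ^+ j * (p`_(j - k) *+ (k <= j)%N).[s0])).
rewrite (big_cat_nat (n := k)) //=; last by lia.
rewrite big_nat big1 ?add0r => [|j /andP[_ hj]]; last first.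
  by rewrite leqNgt hj mulr0n horner0 mulr0.
rewrite -{1}[k]add0n big_addn big_mkord mulr_sumr; apply: eq_bigr => l _.
rewrite addnK leq_addl mulr1n coef_map /= /horner_eval exprD; ring.
Qed.

Lemma resultant_root (f g : P2) s0 t0 : ev2 f s0 t0 = 0 -> ev2 g s0 t0 = 0 ->
  (0 < (size g).-1 + (size f).-1)%N -> (resultant f g).[s0] = 0.
Proof.
move=> hf hg hd; rewrite /resultant -/(horner_eval s0 _) -det_map_mx -det_tr.
apply/eqP/det0P; exists (\row_(j < _) t0 ^+ j).
  apply/eqP => /rowP /(_ (Ordinal hd)); rewrite !mxE expr0 => /eqP.
  by rewrite oner_eq0.
apply/rowP => i; set S := Sylvester_mx f g; rewrite !mxE.
have E : forall j, S i j = match split i with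
   inl k => f`_(j - k) *+ (k <= j)%N | inr k => g`_(j - k) *+ (k <= j)%N end.
  by move=> j; rewrite /S Sylvester_mxE.
rewrite (eq_bigr (fun j : 'I_((size g).-1 + (size f).-1) => t0 ^+ j * (match split i with
   inl k => f`_(j - k) *+ (k <= j)%N | inr k => g`_(j - k) *+ (k <= j)%N end).[s0]));
  last by move=> j _; rewrite !mxE -E /S /Sylvester_mx mxE.
case: (split i) => k; rewrite band_sum ?hf ?hg ?mulr0 //.
  have := ltn_ord k; have := leqSpred (size f).
  set z := size f; set w := size g; lia.
have := ltn_ord k; have := leqSpred (size g).
set z := size f; set w := size g; lia.
Qed.

Lemma tb_size d (r : P2) : tb d r -> (size r <= d.+1)%N.
Proof.
move=> h; apply/leq_sizeP => j hj; apply/eqP; rewrite -size_poly_eq0 -leqn0.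
by apply: leq_trans (h j) _; lia.
Qed.

Lemma resultant_size (f g : P2) m n : tb m f -> tb n g ->
  (size (resultant f g) <= m * n + 1)%N.
Proof.
move=> hf hg.
have hm := tb_size hf; have hn := tb_size hg.
set m0 := (size f).-1; set n0 := (size g).-1.
have hm0 : (m0 <= m)%N by rewrite /m0; lia.
have hn0 : (n0 <= n)%N by rewrite /n0; lia.
rewrite /resultant /determinant.
apply: leq_trans (size_sum _ _ _) _; apply/bigmax_leqP => s _.
rewrite size_Msign.
have [->|nz] := eqVneq (\prod_i Sylvester_mx f g i (s i)) 0.
  by rewrite size_poly0.
pose al (i : nat) := if (i < n0)%N then (m + i)%N else (n + (i - n0))%N.
have hb : forall i, (size (Sylvester_mx f g i (s i)) + s i <= al i + 1)%N.
  move=> i; have : Sylvester_mx f g i (s i) != 0.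
    by apply: contra nz => hz; apply/prodf_eq0; exists i.
  rewrite Sylvester_mxE /al; case: splitP => k hk.
    case: leqP => hkj; last by rewrite mulr0n eqxx.
    rewrite mulr1n => hnz; have := hf (s i - k)%N.
    have : (0 < size (f`_(s i - k))%R)%N by rewrite size_poly_gt0.
    have := ltn_ord k; set z := (size (f`_(s i - k))%R); lia.
  case: leqP => hkj; last by rewrite mulr0n eqxx.
  rewrite mulr1n => hnz; have := hg (s i - k)%N.
  have : (0 < size (g`_(s i - k))%R)%N by rewrite size_poly_gt0.
  have := ltn_ord k; set z := (size (g`_(s i - k))%R); rewrite /n0 in hk *; set w := (size g).-1 in hk *; lia.
have H1 : (\sum_i size (Sylvester_mx f g i (s i)) + \sum_i (s i : nat)
           <= \sum_(i < n0 + m0) (al i + 1))%N.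
  by rewrite -big_split /=; apply: leq_sum => i _; apply: hb.
have H2 : (\sum_(i < n0 + m0) (s i : nat) = \sum_(i < n0 + m0) (i : nat))%N.
  by rewrite [RHS](reindex_inj (@perm.perm_inj _ s)).
have H3 : (\sum_(i < n0 + m0) (i : nat) =
    \sum_(k < n0) (k : nat) + (m0 * n0 + \sum_(k < m0) (k : nat)))%N.
  rewrite big_split_ord /=; congr (_ + _)%N.
  rewrite (eq_bigr (fun k : 'I_m0 => n0 + k)%N) // big_split /=.
  by rewrite sum_nat_const card_ord.
have H4 : (\sum_(i < n0 + m0) (al i + 1) =
    (\sum_(k < n0) (k : nat) + n0 * m.+1) + (\sum_(k < m0) (k : nat) + m0 * n.+1))%N.
  rewrite big_split_ord /=; congr (_ + _)%N.
    rewrite (eq_bigr (fun k : 'I_n0 => k + m.+1)%N); last first.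
      by move=> k _; rewrite /al /= ltn_ord; lia.
    by rewrite big_split /= sum_nat_const card_ord mulnC.
  rewrite (eq_bigr (fun k : 'I_m0 => k + n.+1)%N); last first.
    by move=> k _; rewrite /al /=; case: ifP; lia.
  by rewrite big_split /= sum_nat_const card_ord mulnC.
apply: leq_trans (size_poly_prod_leq _ _) _.
rewrite cardE size_enum_ord.
move: H1; rewrite H2 H3 H4.
set X := (\sum_i _)%N; set T1 := (\sum_(k < n0) _)%N; set T2 := (\sum_(k < m0) _)%N.
move=> H1.
have [a ha] : exists a, m = (m0 + a)%N by exists (m - m0)%N; lia.
have [b hb'] : exists b, n = (n0 + b)%N by exists (n - n0)%N; lia.
rewrite ha hb' in H1 *; rewrite -/n0 -/m0; clear -H1; nia.
Qed.

End P2res.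


Section Conv.
Variable K : numClosedFieldType.
Local Notation P2 := {poly {poly K}}.
Definition cc : K -> P2 := (@polyC {poly K} \o @polyC K).
Definition hh (i : 'I_2) : P2 := if i == 0 :> nat then ('X)%:P else 'X.
Notation conv2 := (mmap cc hh).
Definition B1 : {poly K} -> {mpoly K[2]} := horner_eval ('X_0) \o map_poly (@mpolyC 2 K).
Definition back2 : P2 -> {mpoly K[2]} := horner_eval ('X_1) \o map_poly B1.

Lemma conv2C c : conv2 c%:MP = c%:P%:P.
Proof. by rewrite mmapC. Qed.

Lemma conv2X (i : 'I_2) : conv2 'X_i = hh i.
Proof. by rewrite mmapX mmap1U. Qed.

Lemma back2C c : back2 c%:P%:P = c%:MP.
Proof. by rewrite /back2 /= /horner_eval map_polyC hornerC /= /B1 /= /horner_eval map_polyC hornerC. Qed.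

Lemma conv2_horner (q : {poly {mpoly K[2]}}) x :
  conv2 (q.[x]) = (map_poly conv2 q).[conv2 x].
Proof. by rewrite (horner_map (mmap cc hh)). Qed.

Lemma back2M (p q : P2) : back2 (p * q) = back2 p * back2 q.
Proof. by rewrite /back2 /= /horner_eval rmorphM hornerM. Qed.

Lemma conv2K : cancel back2 conv2.
Proof.
move=> r; rewrite /back2 /= /horner_eval conv2_horner /= -map_poly_comp.
rewrite (conv2X 1) /hh /=.
rewrite (eq_map_poly (g := polyC)) ?hornerXP // => c /=.
rewrite /B1 /= /horner_eval conv2_horner /= -map_poly_comp (conv2X 0) /hh /=.
rewrite (eq_map_poly (g := polyC \o polyC)); last by move=> x /=; rewrite conv2C.
by rewrite map_poly_comp horner_map hornerXP.
Qed.

Lemma back2K : cancel conv2 back2.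
Proof.
move=> p; have := @mpoly_morph_id 2 K (back2 \o conv2); apply => [c|i].
  by change (back2 (conv2 c%:MP) = c%:MP); rewrite conv2C back2C.
change (back2 (conv2 'X_i) = 'X_i).
rewrite conv2X /hh; case: i => [[|[|//]] hi] /=.
  by rewrite /back2 /= /horner_eval map_polyC hornerC /B1 /= /horner_eval map_polyX hornerX; congr 'X_ _; apply: val_inj.
by rewrite /back2 /= /horner_eval map_polyX hornerX; congr 'X_ _; apply: val_inj.
Qed.

Lemma conv2_ev (p : {mpoly K[2]}) s0 t0 :
  ev2 (conv2 p) s0 t0 = p.@[tnth [tuple s0; t0]].
Proof.
rewrite /ev2 -/(horner_eval t0 _).
have -> : horner_eval t0 (map_poly (horner_eval s0) (conv2 p)) =
          (horner_eval t0 \o map_poly (horner_eval s0)) (conv2 p) by [].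
rewrite mmap_comp; apply: mmap_ext => [c|i] /=.
  by rewrite /cc /= map_polyC /= /horner_eval !hornerC.
rewrite /hh; case: i => [[|[|//]] hi] /=.
  by rewrite map_polyC /= /horner_eval hornerC hornerX (tnth_nth 0).
by rewrite map_polyX /horner_eval hornerX (tnth_nth 0).
Qed.

Lemma conv2_tb d (p : {mpoly K[2]}) : (msize p <= d.+1)%N -> tb d (conv2 p).
Proof.
move=> hp i; rewrite /mmap coef_sum.
apply: leq_trans (size_sum _ _ _) _; apply/bigmax_leqP_seq => m hm _.
have e0 : widen_ord (leqnSn 1) ord_max = ord0 :> 'I_2 by apply: val_inj.
have e1 : (ord_max : 'I_2) = Ordinal (isT : (1 < 2)%N) by apply: val_inj.
have E : cc p@_m * mmap1 hh m = ((p@_m)%:P * 'X^(m ord0))%:P * 'X^(m (@Ordinal 2 1 isT)).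
  rewrite /mmap1 big_ord_recr big_ord_recr big_ord0 /= mul1r /hh /= /cc /=.
  by rewrite e0 e1 -(rmorphXn polyC) polyCM mulrA.
rewrite E coefCM coefXn.
have hd := msize_mdeg_lt hm.
rewrite mdegE big_ord_recr big_ord_recr big_ord0 /= e0 e1 in hd.
case: eqP => [hi|_]; last by rewrite mulr0 size_poly0.
rewrite mulr1; apply: leq_trans (size_mul_leq _ _) _.
rewrite size_polyC size_polyXn.
have : (nat_of_bool (p@_m != 0%R) <= 1)%N by case: (_ != _).
lia.
Qed.

End Conv.


Section TwoPoly.
Variable K : numClosedFieldType.
Local Notation P2 := {poly {poly K}}.
Local Notation M2 := {mpoly K[2]}.
Local Notation conv2 := (mmap (@cc K) (hh K)).

Definition ev2m (p : M2) (s t : K) := p.@[tnth [tuple s; t]].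
Definition mdvd (h f : M2) := exists k, f = k * h.

Lemma prod_neq0 (R : idomainType) (I : eqType) (r : seq I) (P : pred I) (F : I -> R) :
  (forall i, i \in r -> P i -> F i != 0) -> \prod_(i <- r | P i) F i != 0.
Proof.
elim: r => [|a r IH] h; first by rewrite big_nil oner_eq0.
rewrite big_cons; case: ifP => hP.
  rewrite mulf_neq0 ?IH //; first by apply: h; rewrite ?mem_head.
  by move=> i hi; apply: h; rewrite inE hi orbT.
by apply: IH => i hi; apply: h; rewrite inE hi orbT.
Qed.

Lemma prod_neq0_inv (R : idomainType) (I : eqType) (r : seq I) (P : pred I) (F : I -> R) :
  \prod_(i <- r | P i) F i != 0 -> forall i, i \in r -> P i -> F i != 0.
Proof.
elim: r => [|a r IH] //; rewrite big_cons => h i; rewrite inE => /orP [/eqP ->|hi] hP.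
  by move: h; rewrite hP mulf_eq0 negb_or => /andP [].
apply: IH hi hP; move: h; case: ifP => // _; rewrite mulf_eq0 negb_or.
by case/andP.
Qed.

Lemma nc_back2 (h : P2) : (forall c, h <> c%:P%:P) -> forall c, back2 h <> c%:MP.
Proof. by move=> nh c e; apply: (nh c); rewrite -(conv2K h) e conv2C. Qed.

Lemma TP0 (f g : M2) m n (S : seq (K * K)) :
  (msize f <= m.+1)%N -> (msize g <= n.+1)%N ->
  (forall h : M2, (forall c, h <> c%:MP) -> mdvd h f -> mdvd h g -> False) ->
  uniq (map fst S) ->
  (forall q, q \in S -> ev2m f q.1 q.2 = 0 /\ ev2m g q.1 q.2 = 0) ->
  (size S <= m * n)%N.
Proof.
move=> hf hg hco hu hv.
have tf := conv2_tb hf; have tg := conv2_tb hg.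
set f' := conv2 f in tf; set g' := conv2 g in tg.
have vf q : q \in S -> ev2 f' q.1 q.2 = 0 by move=> /hv [h _]; rewrite conv2_ev.
have vg q : q \in S -> ev2 g' q.1 q.2 = 0 by move=> /hv [_ h]; rewrite conv2_ev.
have divP : forall h' : P2, (forall c, h' <> c%:P%:P) ->
    (exists k, f' = k * h') -> (exists k, g' = k * h') -> False.
  move=> h' nch [k hk] [k' hk']; apply: (hco (back2 h')); first exact: nc_back2.
    by exists (back2 k); rewrite -(back2K f) -/f' hk back2M.
  by exists (back2 k'); rewrite -(back2K g) -/g' hk' back2M.
case: (ltnP 0 ((size g').-1 + (size f').-1)) => hd.
  have [R0|Rnz] := eqVneq (resultant f' g') 0.
    case: (res0_factor R0) => h' [sh [k hk] [k' hk']]; exfalso.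
    apply: (divP h'); [|by exists k|by exists k'].
    by move=> c e; move: sh; rewrite e size_polyC; case: (_ != 0).
  have := max_poly_roots Rnz (rs := map fst S).
  have hs := resultant_size tf tg.
  rewrite size_map; move=> H; have {}H := H _ hu.
  suff : (size S < size (resultant f' g'))%N by lia.
  apply: H; apply/allP => x /mapP [q hq ->]; apply/rootP.
  exact: resultant_root (vf q hq) (vg q hq) hd.
case: S hu hv vf vg => [|q S'] // _ _ vf vg; exfalso.
have sf : (size f' <= 1)%N by move: hd; set z := size f'; set w := size g'; lia.
have sg : (size g' <= 1)%N by move: hd; set z := size f'; set w := size g'; lia.
have hq : q \in q :: S' by rewrite mem_head.
have dvd1 (p : P2) : (size p <= 1)%N -> ev2 p q.1 q.2 = 0 ->
    exists k, p = k * ('X - q.1%:P)%:P.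
  move=> sp; rewrite [p]size1_polyC // /ev2 map_polyC hornerC /= /horner_eval.
  move=> /rootP /factor_theorem [k1 hk1]; exists k1%:P; by rewrite hk1 polyCM.
apply: (divP ('X - q.1%:P)%:P); [|exact: dvd1 (vf q hq)|exact: dvd1 (vg q hq)].
move=> c /polyC_inj e; have := size_XsubC q.1; rewrite e size_polyC.
by case: (_ != 0).
Qed.

Definition shear (l : K) (p : M2) : M2 := p \mPo [tuple 'X_0 + l *: 'X_1; 'X_1].

Lemma shearM l p q : shear l (p * q) = shear l p * shear l q.
Proof. by rewrite /shear rmorphM. Qed.

Lemma shearC l c : shear l c%:MP = c%:MP.
Proof. by rewrite /shear comp_mpolyC. Qed.

Lemma shearK l p : shear (- l) (shear l p) = p.
Proof.
have := @mpoly_morph_id 2 K (comp_mpoly [tuple 'X_0 + (- l) *: 'X_1; 'X_1]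
  \o comp_mpoly [tuple 'X_0 + l *: 'X_1; 'X_1]); apply => [c|i].
  by rewrite /= !comp_mpolyC.
rewrite /= comp_mpolyXU; case: i => [[|[|//]] hi] /=.
  rewrite comp_mpolyD comp_mpolyZ !comp_mpolyXU /= scaleNr addrNK.
  by congr 'X_ _; apply: val_inj.
by rewrite comp_mpolyXU /=; congr 'X_ _; apply: val_inj.
Qed.

Lemma shear_ev l p s t : ev2m (shear l p) s t = ev2m p (s + l * t) t.
Proof.
rewrite /ev2m /shear comp_mpoly_meval; apply: mmap_ext => // i.
case: i => [[|[|//]] hi]; rewrite /= !(tnth_nth 0) /=.
  by rewrite mevalD mevalZ !mevalXU !(tnth_nth 0).
by rewrite mevalXU (tnth_nth 0).
Qed.

Lemma msizeXn_le (q : M2) k : (msize q <= 2)%N -> (msize (q ^+ k) <= k.+1)%N.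
Proof.
move=> hq; elim: k => [|k IH]; first by rewrite expr0 msize1.
rewrite exprS; have [->|nz] := eqVneq q 0; first by rewrite mul0r msize0.
have [e|nz2] := eqVneq (q ^+ k) 0; first by rewrite e mulr0 msize0.
rewrite msizeM //; move: hq IH; set a := msize q; set b := msize (q ^+ k); lia.
Qed.

Lemma shear_msize l p : (msize (shear l p) <= msize p)%N.
Proof.
rewrite /shear comp_mpolyE; apply: leq_trans (msize_sum _ _ _) _.
apply/bigmax_leqP_seq => m hm _; apply: leq_trans (msizeZ_le _ _) _.
rewrite big_ord_recr big_ord_recr big_ord0 /= mul1r !(tnth_nth 0) /=.
have hd := msize_mdeg_lt hm; rewrite mdegE big_ord_recr big_ord_recr big_ord0 /= in hd.
set a := m _ in hd *; set b := m _ in hd *.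
have h0 : (msize ('X_0 + l *: 'X_1 : M2)%R <= 2)%N.
  apply: leq_trans (msizeD_le _ _) _; rewrite geq_max msizeX mdeg1 /=.
  by apply: leq_trans (msizeZ_le _ _) _; rewrite msizeX mdeg1.
have h1 : (msize ('X_1 : M2)%R <= 2)%N by rewrite msizeX mdeg1.
have := msizeXn_le a h0; have := msizeXn_le b h1.
set u := (_ ^+ a); set v := (_ ^+ b) => hv hu.
have [->|nzu] := eqVneq u 0; first by rewrite mul0r msize0.
have [->|nzv] := eqVneq v 0; first by rewrite mulr0 msize0.
rewrite msizeM //; move: hu hv hd; set x := msize u; set y := msize v; set z := msize p; lia.
Qed.

Lemma exists_sep (S : seq (K * K)) : uniq S ->
  exists l, uniq (map (fun q => q.1 - l * q.2) S).
Proof.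
move=> hu.
pose F (q q' : K * K) : {poly K} := (q.1 - q'.1)%:P - (q.2 - q'.2)%:P * 'X.
pose P := \prod_(q <- S) \prod_(q' <- S | q' != q) F q q'.
have nzP : P != 0.
  apply: prod_neq0 => q hq _; apply: prod_neq0 => q' hq' hne.
  apply/eqP => e; move/negP: hne; apply; apply/eqP.
  have e0 := congr1 (fun p : {poly K} => p`_0) e; have e1 := congr1 (fun p : {poly K} => p`_1) e.
  rewrite /F /= coefB coefC coefMX coefC /= subr0 coef0 in e0.
  rewrite /F /= coefB coefC coefMX coefC /= sub0r coef0 in e1.
  move/eqP: e0; rewrite subr_eq0 => /eqP e0.
  move/eqP: e1; rewrite oppr_eq0 subr_eq0 => /eqP e1.
  by case: q q' e0 e1 {hq hq' e} => [a b] [c d] /= -> ->.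
have [l hl] : exists l, ~~ root P l.
  pose rs := [seq i%:R | i <- iota 0 (size P)] : seq K.
  have : ~~ all (root P) rs.
    apply/negP => hall; have := max_poly_roots nzP hall.
    rewrite /rs size_map size_iota ltnn => H; suff : false by []; apply: H.
    rewrite map_inj_uniq ?iota_uniq // => i j /eqP; rewrite eqr_nat => /eqP.
    done.
  by case/allPn => x _ hx; exists x.
exists l; rewrite map_inj_in_uniq // => q q' hq hq' e.
apply/eqP; apply: contraT => hne.
move: hl; rewrite /root horner_prod => /prod_neq0_inv /(_ q hq isT).
rewrite horner_prod => /prod_neq0_inv /(_ q' hq'); rewrite eq_sym => /(_ hne).
rewrite /F !hornerE.
have -> : q.1 - q'.1 - (q.2 - q'.2) * l = (q.1 - l * q.2) - (q'.1 - l * q'.2) by ring.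
by rewrite e subrr eqxx.
Qed.

Lemma TP (f g : M2) m n (S : seq (K * K)) :
  (msize f <= m.+1)%N -> (msize g <= n.+1)%N ->
  (forall h : M2, (forall c, h <> c%:MP) -> mdvd h f -> mdvd h g -> False) ->
  uniq S ->
  (forall q, q \in S -> ev2m f q.1 q.2 = 0 /\ ev2m g q.1 q.2 = 0) ->
  (size S <= m * n)%N.
Proof.
move=> hf hg hco hu hv.
have [l hl] := exists_sep hu.
pose S' := map (fun q => (q.1 - l * q.2, q.2)) S.
have -> : size S = size S' by rewrite size_map.
apply: (@TP0 (shear l f) (shear l g)).
- exact: leq_trans (shear_msize _ _) hf.
- exact: leq_trans (shear_msize _ _) hg.
- move=> h nh [k hk] [k' hk']; apply: (hco (shear (- l) h)).
  + by move=> c e; apply: (nh c); rewrite -(shearK (- l) h) opprK e shearC.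
  + by exists (shear (- l) k); rewrite -shearM -hk shearK.
  + by exists (shear (- l) k'); rewrite -shearM -hk' shearK.
- by rewrite /S' -map_comp.
- move=> q' /mapP [q hq ->] /=; rewrite !shear_ev subrK; exact: hv.
Qed.

End TwoPoly.


Section Fam.
Variable K : numClosedFieldType.
Local Notation M2 := {mpoly K[2]}.

Lemma ev2mM (p q : M2) s t : ev2m (p * q) s t = ev2m p s t * ev2m q s t.
Proof. by rewrite /ev2m mevalM. Qed.

Lemma nc_msize (p : M2) : p != 0 -> (forall c, p <> c%:MP) -> (2 <= msize p)%N.
Proof.
move=> nz nc; rewrite ltnNge; apply/negP => h.
by apply: (nc p@_0); apply: msize1_polyC.
Qed.

Lemma mdvd_trans (a b c : M2) : mdvd a b -> mdvd b c -> mdvd a c.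
Proof. by move=> [x ->] [y ->]; exists (y * x); rewrite mulrA. Qed.

Lemma mdvd_mull (a b k : M2) : mdvd a b -> mdvd a (k * b).
Proof. by move=> [x ->]; exists (k * x); rewrite mulrA. Qed.

Lemma FAM (fs : seq M2) (d : nat) : forall (e : nat) (f0 : M2) (S : seq (K * K)),
  f0 != 0 -> (msize f0 <= e.+1)%N -> (forall f, f \in fs -> (msize f <= d.+1)%N) ->
  uniq S ->
  (forall q, q \in S -> ev2m f0 q.1 q.2 = 0 /\ forall f, f \in fs -> ev2m f q.1 q.2 = 0) ->
  (forall h, (forall c, h <> c%:MP) -> mdvd h f0 -> (forall f, f \in fs -> mdvd h f) -> False) ->
  (size S <= e * d)%N.
Proof.
elim: fs => [|g fs IHl].
  move=> e f0 S nz _ _ _ hv hco.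
  have [c hc] : exists c, f0 = c%:MP.
    apply: NNPP => hn; apply: (hco f0) => //; last by exists 1; rewrite mul1r.
    by move=> c e'; apply: hn; exists c.
  case: S hv => [|q S] // hv; exfalso.
  have [h1 _] := hv q (mem_head _ _).
  move: h1 nz; rewrite hc /ev2m mevalC => ->; by rewrite eqxx.
move=> e; have [b hb] : exists b, (e < b)%N by exists e.+1.
elim: b e hb => // b IHb e heb f0 S nz hs0 hsf hu hv hco.
have IHe : forall e', (e' < e)%N -> forall f0' S', f0' != 0 -> (msize f0' <= e'.+1)%N ->
  (forall f, f \in g :: fs -> (msize f <= d.+1)%N) -> uniq S' ->
  (forall q, q \in S' -> ev2m f0' q.1 q.2 = 0 /\ forall f, f \in g :: fs -> ev2m f q.1 q.2 = 0) ->
  (forall h, (forall c, h <> c%:MP) -> mdvd h f0' -> (forall f, f \in g :: fs -> mdvd h f) -> False) ->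
  (size S' <= e' * d)%N.
  by move=> e' he'; apply: IHb; lia.
have hg : g \in g :: fs by rewrite mem_head.
case: (classic (exists h, (forall c, h <> c%:MP) /\ mdvd h f0 /\ mdvd h g))
   => [[h [nh [[k hk] [k' hk']]]] | nex]; last first.
  apply: (TP hs0 (hsf g hg)) => // [h nh d1 d2|q hq].
    by apply: nex; exists h.
  by have [? h2] := hv q hq; split => //; apply: h2.
have nzk : k != 0 by apply: contra nz; rewrite hk => /eqP ->; rewrite mul0r.
have nzh : h != 0 by apply: contra nz; rewrite hk => /eqP ->; rewrite mulr0.
case: (classic (exists c, k = c%:MP)) => [[c hc] | nck].
  have nzc : c != 0 by apply: contra nzk; rewrite hc => /eqP ->; rewrite mpolyC0.
  apply: (IHl e f0 S) => //.
  - by move=> f hf; apply: hsf; rewrite inE hf orbT.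
  - move=> q hq; have [h1 h2] := hv q hq; split => // f hf; apply: h2.
    by rewrite inE hf orbT.
  move=> h' nh' d0 dall; apply: (hco h' nh' d0) => f; rewrite inE => /orP [/eqP ->|hf].
    rewrite hk'; apply: mdvd_mull.
    have -> : h = (c^-1)%:MP * f0 by rewrite hk hc mulrA -mpolyCM mulVf // mpolyC1 mul1r.
    exact: mdvd_mull.
  exact: dall.
have nck' : forall c, k <> c%:MP by move=> c e'; apply: nck; exists c.
have mh := nc_msize nzh nh; have mk := nc_msize nzk nck'.
have ms : msize f0 = (msize k + msize h).-1 by rewrite hk msizeM.
pose e1 := (msize h).-1; pose e2 := (msize k).-1.
have he1 : (e1 < e)%N by rewrite /e1; move: hs0; rewrite ms; lia.
have he2 : (e2 < e)%N by rewrite /e2; move: hs0; rewrite ms; lia.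
have he12 : (e1 + e2 <= e)%N by rewrite /e1 /e2; move: hs0; rewrite ms; lia.
pose P := fun q : K * K => ev2m h q.1 q.2 == 0.
have H1 : (size (filter P S) <= e1 * d)%N.
  apply: (IHe e1 he1 h) => //.
  - by rewrite /e1; lia.
  - exact: filter_uniq.
  - move=> q; rewrite mem_filter => /andP [/eqP hq1 hq]; split => //.
    by have [_ h2] := hv q hq.
  - move=> h' nh' d0 dall; apply: (hco h' nh') => //.
    by rewrite hk; apply: mdvd_mull.
have H2 : (size (filter (predC P) S) <= e2 * d)%N.
  apply: (IHe e2 he2 k) => //.
  - by rewrite /e2; lia.
  - exact: filter_uniq.
  - move=> q; rewrite mem_filter => /andP [hq1 hq]; split; last first.
      by have [_ h2] := hv q hq.
    have [h0 _] := hv q hq; move: h0; rewrite hk ev2mM => /eqP.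
    rewrite mulf_eq0 => /orP [/eqP //|/eqP hh0].
    by move: hq1; rewrite /P /= hh0 eqxx.
  - move=> h' nh' d0 dall; apply: (hco h' nh') => //.
    rewrite hk; move: d0 => [x ->]; exists (x * h); by rewrite mulrAC.
apply: (@leq_trans (size (filter P S) + size (filter (predC P) S))).
  by rewrite !size_filter count_predC.
apply: leq_trans (leq_add H1 H2) _.
by rewrite -mulnDl leq_mul2r he12 orbT.
Qed.

End Fam.


Section Main.
Variable K : numClosedFieldType.
Local Notation M2 := {mpoly K[2]}.
Local Notation M4 := {mpoly K[4]}.
Local Notation Q := {poly {poly M2}}.

Definition c4 : K -> Q := (@polyC _ \o @polyC _ \o @mpolyC 2 K).
Definition h4 (i : 'I_4) : Q := match val i with
  | 0 => ('X)%:P | 1 => 'X | 2 => ('X_0 : M2)%:P%:P | _ => ('X_1 : M2)%:P%:P end.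
Local Notation Phi := (mmap c4 h4).
Definition B4 : Q -> M4 := horner_eval 'X_iy \o
  map_poly (horner_eval 'X_ix \o map_poly (comp_mpoly [tuple ('X_is_ : M4); 'X_it])).

Lemma B4M (p q : Q) : B4 (p * q) = B4 p * B4 q.
Proof. by rewrite /B4 rmorphM. Qed.

Lemma B4C (h : M2) : B4 h%:P%:P = embed_st h.
Proof.
change ((map_poly (horner_eval 'X_ix \o map_poly (comp_mpoly [tuple ('X_is_ : M4); 'X_it]))
  h%:P%:P).['X_iy] = embed_st h).
by rewrite map_polyC hornerC /= /horner_eval map_polyC hornerC.
Qed.

Lemma B4X : B4 'X = 'X_iy.
Proof.
change ((map_poly (horner_eval 'X_ix \o map_poly (comp_mpoly [tuple ('X_is_ : M4); 'X_it]))
  'X).['X_iy] = 'X_iy).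
by rewrite map_polyX hornerX.
Qed.

Lemma B4XP : B4 ('X)%:P = 'X_ix.
Proof.
change ((map_poly (horner_eval 'X_ix \o map_poly (comp_mpoly [tuple ('X_is_ : M4); 'X_it]))
  ('X)%:P).['X_iy] = 'X_ix).
by rewrite map_polyC hornerC /= /horner_eval map_polyX hornerX.
Qed.

Lemma B4K (p : M4) : B4 (Phi p) = p.
Proof.
have := @mpoly_morph_id 4 K (B4 \o Phi); apply => [c|i].
  change (B4 (Phi c%:MP) = c%:MP); rewrite mmapC /c4 /= B4C /embed_st.
  by rewrite comp_mpolyC.
change (B4 (Phi 'X_i) = 'X_i); rewrite mmapX mmap1U /h4.
case: i => [[|[|[|[|//]]]] hi] /=.
- by rewrite B4XP; congr 'X_ _; apply: val_inj.
- by rewrite B4X; congr 'X_ _; apply: val_inj.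
- rewrite B4C /embed_st comp_mpolyXU /=.
  by congr 'X_ _; apply: val_inj.
- rewrite B4C /embed_st comp_mpolyXU /=.
  by congr 'X_ _; apply: val_inj.
Qed.

Definition Psi (x y : K) (v : 'I_2 -> K) : Q -> K :=
  horner_eval y \o map_poly (horner_eval x \o map_poly (meval v)).

Lemma PsiC x y v u : Psi x y v u%:P%:P = meval v u.
Proof.
change ((map_poly (horner_eval x \o map_poly (meval v)) u%:P%:P).[y] = meval v u).
by rewrite map_polyC hornerC /= /horner_eval map_polyC hornerC.
Qed.

Lemma PsiX x y v : Psi x y v 'X = y.
Proof.
change ((map_poly (horner_eval x \o map_poly (meval v)) 'X).[y] = y).
by rewrite map_polyX hornerX.
Qed.

Lemma PsiXP x y v : Psi x y v ('X)%:P = x.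
Proof.
change ((map_poly (horner_eval x \o map_poly (meval v)) ('X)%:P).[y] = x).
by rewrite map_polyC hornerC /= /horner_eval map_polyX hornerX.
Qed.

Lemma Phi_ev (p : M4) x y s t :
  (map_poly (horner_eval x) (map_poly (map_poly (meval (tnth [tuple s; t]))) (Phi p))).[y]
  = p.@[tnth [tuple x; y; s; t]].
Proof.
have -> : (map_poly (horner_eval x) (map_poly (map_poly (meval (tnth [tuple s; t]))) (Phi p))).[y]
  = Psi x y (tnth [tuple s; t]) (Phi p).
  by rewrite /Psi /= map_poly_comp.
transitivity (mmap (Psi x y (tnth [tuple s; t]) \o c4) (Psi x y (tnth [tuple s; t]) \o h4) p); first exact: mmap_comp.
apply: mmap_ext => [c|i].
  by rewrite /comp /c4 /= PsiC mevalC.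
rewrite /comp /h4 !(tnth_nth 0); case: i => [[|[|[|[|//]]]] hi] /=.
- by rewrite PsiXP.
- by rewrite PsiX.
- by rewrite PsiC mevalXU (tnth_nth 0).
- by rewrite PsiC mevalXU (tnth_nth 0).
Qed.

Lemma sum4 (F : 'I_4 -> nat) : (\sum_i F i = F ix + F iy + F is_ + F it)%N.
Proof.
rewrite !big_ord_recl big_ord0 /= addn0 !addnA.
by congr (_ + _ + _ + _)%N; apply: congr1; apply: val_inj.
Qed.

Lemma prod4 (R : comNzRingType) (F : 'I_4 -> R) : \prod_i F i = F ix * F iy * F is_ * F it.
Proof.
rewrite !big_ord_recl big_ord0 /= mulr1 !mulrA.
by congr (_ * _ * _ * _); apply: congr1; apply: val_inj.
Qed.

Lemma Phi_coef_msize (p : M4) a b : (msize (((Phi p)`_b)`_a)%R <= msize p)%N.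
Proof.
rewrite /mmap !coef_sum; apply: leq_trans (msize_sum _ _ _) _.
apply/bigmax_leqP_seq => m hm _.
have hd := msize_mdeg_lt hm.
have e1 : lift ord0 ord0 = iy :> 'I_4 by apply: val_inj.
have e2 : lift ord0 (lift ord0 ord0) = is_ :> 'I_4 by apply: val_inj.
have e3 : lift ord0 (lift ord0 (lift ord0 ord0)) = it :> 'I_4 by apply: val_inj.
have e0 : ord0 = ix :> 'I_4 by apply: val_inj.
rewrite mdegE sum4 in hd.
have E : c4 p@_m * mmap1 h4 m = (((p@_m *: ('X_0 ^+ m is_ * 'X_1 ^+ m it))%:P
           * 'X^(m ix))%:P * 'X^(m iy) :> Q).
  rewrite /mmap1 prod4 /h4 /c4 /=.
  rewrite -mul_mpolyC !polyCM !(rmorphXn polyC) /=.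
  by rewrite -!mulrA; congr (_ * _); rewrite [LHS]mulrA [RHS]mulrA [RHS]mulrC.
rewrite E coefCM coefXn mulr_natr coefMn coefCM coefXn mulr_natr.
set u := (p@_m *: _).
have hu : (msize u <= (m is_ + m it).+1)%N.
  apply: leq_trans (msizeZ_le _ _) _.
  have h0 : (msize ('X_0 : M2)%R <= 2)%N by rewrite msizeX mdeg1.
  have h1 : (msize ('X_1 : M2)%R <= 2)%N by rewrite msizeX mdeg1.
  have := msizeXn_le (m is_) h0; have := msizeXn_le (m it) h1.
  set x := (_ ^+ m is_); set y := (_ ^+ m it) => hy hx.
  have [->|nzx] := eqVneq x 0; first by rewrite mul0r msize0.
  have [->|nzy] := eqVneq y 0; first by rewrite mulr0 msize0.
  rewrite msizeM //; move: hx hy; set z1 := msize x; set z2 := msize y; lia.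
case: (b == m iy); case: (a == m ix); rewrite /= ?mulr0n ?msize0 ?mulr1n //.
move: hu hd; set z := msize u; set w := msize p; lia.
Qed.

Lemma poly2_vanish (G : {poly {poly K}}) :
  (forall x y, (map_poly (horner_eval x) G).[y] = 0) -> G = 0.
Proof.
move=> h; apply/polyP => b; rewrite coef0; apply: poly_vanish => x.
have := poly_vanish (h x) => /(congr1 (fun r : {poly K} => r`_b)).
by rewrite coef_map coef0.
Qed.

Lemma X0_nonconst : forall c : K, ('X_0 : M2) <> c%:MP.
Proof.
move=> c e; have := congr1 (fun p : M2 => msize p) e.
by rewrite /= msizeX mdeg1 msizeC; case: (_ != 0).
Qed.

Lemma main_gen (F : M4) : ~ cartesian F -> forall S : seq (K * K), uniq S ->
  (forall q, q \in S -> forall x y : K, ev4 F x y q.1 q.2 = 0) ->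
  (size S <= (tdeg F) ^ 2)%N.
Proof.
move=> nc S hu hv.
set A := Phi F.
have cart : forall h : M2, (forall c, h <> c%:MP) ->
    (forall b a, exists k, (A`_b)`_a == k * h) -> False.
  move=> h nh hd; apply: nc.
  pose kk b a := xchoose (hd b a).
  pose L : Q := \poly_(b < size A) \poly_(a < size (A`_b)) kk b a.
  have eA : A = h%:P%:P * L.
    apply/polyP => b; apply/polyP => a; rewrite !coefCM !coef_poly.
    case: ltnP => hb; last by rewrite (nth_default 0 hb) !nth_default ?size_poly0 ?mulr0.
    rewrite coef_poly; case: ltnP => ha; last by rewrite nth_default // mulr0.
    by rewrite mulrC; apply/eqP; exact: (xchooseP (hd b a)).
  exists ('X_0 : M2), h, 0, (B4 L); split => //; first exact: X0_nonconst.
  by rewrite mulr0 add0r -[F]B4K -/A eA B4M B4C.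
pose M := (\max_(b <- iota 0 (size A)) size (A`_b)%R)%N.
pose fs := [seq (A`_b)`_a | b <- iota 0 (size A), a <- iota 0 M].
have memfs : forall b a, (A`_b)`_a != 0 -> (A`_b)`_a \in fs.
  move=> b a nz.
  have hb : (b < size A)%N.
    by rewrite ltnNge; apply: contra nz => hb; rewrite (nth_default 0 hb) nth_default ?size_poly0.
  have ha : (a < size (A`_b)%R)%N.
    by rewrite ltnNge; apply: contra nz => ha; rewrite nth_default.
  apply: (allpairs_f (fun b a => (A`_b)`_a)).
    by rewrite mem_iota add0n hb.
  rewrite mem_iota add0n /=.
  apply: leq_trans ha _; apply: (@leq_bigmax_seq _ _ _ (fun b => size (A`_b))) => //.
  by rewrite mem_iota add0n hb.
have fsP : forall f, f \in fs -> exists b a, f = (A`_b)`_a.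
  by move=> f /allpairsP [[b1 a1] [_ _ ->]]; exists b1, a1.
have hdiv : forall h, (forall c, h <> c%:MP) -> (forall f, f \in fs -> mdvd h f) -> False.
  move=> h nh hall; apply: (cart h nh) => b a.
  have [->|nz] := eqVneq ((A`_b)`_a) 0; first by exists 0; rewrite mul0r.
  by have [k hk] := hall _ (memfs b a nz); exists k; rewrite hk.
case: (boolP (has (fun f => f != 0) fs)) => [/hasP [f0 hf0 nz0]|hn]; last first.
  exfalso; apply: (hdiv 'X_0); first exact: X0_nonconst.
  move=> f hf; move/hasPn: hn => /(_ f hf); rewrite negbK => /eqP ->.
  by exists 0; rewrite mul0r.
set d := tdeg F.
have hF : (msize F <= d.+1)%N by rewrite /d /tdeg leqSpred.
have hsz : forall f, f \in fs -> (msize f <= d.+1)%N.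
  by move=> f /fsP [b [a ->]]; exact: leq_trans (Phi_coef_msize F a b) hF.
rewrite -mulnn; apply: (@FAM K fs d d f0 S) => //.
- exact: hsz.
- move=> q hq.
  have G0 : map_poly (map_poly (meval (tnth [tuple q.1; q.2]))) A = 0.
    by apply: poly2_vanish => x y; rewrite Phi_ev; exact: hv.
  have vf : forall f, f \in fs -> ev2m f q.1 q.2 = 0.
    move=> f /fsP [b [a ->]]; have := congr1 (fun r : {poly {poly K}} => (r`_b)`_a) G0.
    by rewrite /= coef_map /= coef_map /= !coef0.
  by split; [exact: vf|exact: vf].
- by move=> h nh _ hall; exact: hdiv h nh hall.
Qed.

End Main.


Unset Implicit Arguments.

Theorem lemma2p4 (R : realType) (F : {mpoly R[i][4]}) :
  ~ cartesian F ->
  forall S : seq (R[i] * R[i]),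
    uniq S ->
    (forall q, q \in S -> forall x y : R[i], ev4 F x y q.1 q.2 = 0) ->
    (size S <= (tdeg F) ^ 2)%N.
Proof.
move=> nc S hu hv; exact: (main_gen nc hu hv).
Qed.
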